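(* Let $M$, $N$ and $Y$ be real normed spaces. Assume that $T\in L(M\oplus_\infty N,Y)$ and $m\in M$, $n\in N$ are such that $m+n$ lies in the unit sphere of $M\oplus_\infty N$, $\Vert n\Vert<1$ and $\Vert T(m+n)\Vert=\Vert T\Vert$. Then $\Vert T(m)\Vert=\Vert T\Vert$.
   Context: $M\oplus_\infty N$ denotes the direct sum with norm $\Vert m+n\Vert=\max\{\Vert m\Vert,\Vert n\Vert\}$. $L(X,Y)$ is the space of bounded linear operators with the operator norm. *)

(* Defs.v *)
From HB Require Import structures.
From mathcomp Require Import all_boot all_order all_algebra.
From mathcomp Require Import all_classical all_reals all_analysis.
Set Implicit Arguments. Unset Strict Implicit. Unset Printing Implicit Defensive.
Import Order.TTheory GRing.Theory Num.Theory.
Local Open Scope classical_set_scope.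
Local Open Scope ring_scope.

(* Norm of M (+)_oo N, realised on the product type M * N:
   ||(m, n)|| = max(||m||, ||n||). *)
Definition infnorm (R : realType) (M N : normedModType R) (x : M * N) : R :=
  Num.max `|x.1| `|x.2|.

Definition bounded_op (R : realType) (M N Y : normedModType R)
  (T : {linear (M * N)%type -> Y}) : Prop :=
  exists C : R, forall x : M * N, `|T x| <= C * infnorm x.

Definition opnorm (R : realType) (M N Y : normedModType R)
  (T : {linear (M * N)%type -> Y}) : R :=
  sup [set `|T x| | x in [set x : M * N | infnorm x <= 1]].

(* Main.v *)
Require Import Defs.
From HB Require Import structures.
From mathcomp Require Import all_boot all_order all_algebra.
From mathcomp Require Import all_classical all_reals all_analysis.
From mathcomp Require Import ring lra.
Import Order.TTheory GRing.Theory Num.Theory.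
Local Open Scope ring_scope.

Lemma opnorm_ub (R : realType) (M N Y : normedModType R)
  (T : {linear (M * N)%type -> Y}) :
  bounded_op T -> forall x, infnorm x <= 1 -> `|T x| <= opnorm T.
Proof.
move=> [C HC] x hx; apply: ub_le_sup; last by exists x.
exists `|C| => _ [y hy <-].
have i0 : 0 <= infnorm y by rewrite /infnorm le_max normr_ge0.
apply: (le_trans (HC y)).
apply: (@le_trans _ _ (`|C| * infnorm y)).
  by apply: ler_wpM2r => //; apply: real_ler_norm; apply: num_real.
by apply: ler_piMr => //.
Qed.

Theorem lemma4p1 (R : realType) (M N Y : normedModType R)
  (T : {linear (M * N)%type -> Y}) (m : M) (n : N) :
  bounded_op T ->
  infnorm (m, n) = 1 ->
  `|n| < 1 ->
  `|T (m, n)| = opnorm T ->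
  `|T (m, 0)| = opnorm T.
Proof.
move=> hb h1 hn hK.
have hm : `|m| <= 1 by rewrite -h1 /infnorm le_max lexx.
have hm0 : infnorm (m, 0 : N) <= 1.
  by rewrite /infnorm /= normr0 ge_max hm ler01.
apply/eqP; rewrite eq_le (@opnorm_ub _ _ _ _ _ hb _ hm0) /=.
have c0 : 0 <= `|n| by rewrite normr_ge0.
set t := (1 - `|n|) / 2.
have t0 : 0 < t by rewrite /t; apply: divr_gt0; rewrite ?subr_gt0.
have s0 : 0 < 1 - t by rewrite /t; lra.
have hs : infnorm (m, (1 - t)^-1 *: n) <= 1.
  rewrite /infnorm /= ge_max hm /= normrZ ger0_norm ?invr_ge0 ?ltW //.
  rewrite mulrC ltr_pdivrMr // mul1r /t; lra.
clearbody t.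
have E : (m, n) = t *: (m, 0 : N) + (1 - t) *: (m, (1 - t)^-1 *: n).
  congr pair => /=.
    by rewrite -scalerDl addrC subrK scale1r.
  by rewrite scaler0 add0r scalerA mulfV ?scale1r // gt_eqF.
have := @opnorm_ub _ _ _ _ _ hb _ hs.
move: hK; rewrite E linearD !linearZ /= => hK h2.
have h3 := ler_normD (t *: T (m, 0)) ((1 - t) *: T (m, (1 - t)^-1 *: n)).
move: h3; rewrite hK !normrZ (ger0_norm (ltW t0)) (ger0_norm (ltW s0)) => h3.
have h4 : (1 - t) * `|T (m, (1 - t)^-1 *: n)| <= (1 - t) * opnorm T.
  by rewrite ler_pM2l.
have : t * opnorm T <= t * `|T (m, 0)|.
  have -> : t * opnorm T = opnorm T - (1 - t) * opnorm T by ring.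
  move: h3 h4; move: (t * `|T (m, 0)|) ((1 - t) * `|T (m, (1 - t)^-1 *: n)|).
  move: ((1 - t) * opnorm T) (opnorm T) => a b c d; lra.
by rewrite ler_pM2l.
Qed.
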